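(* Let $L$ be a geometric lattice of rank $r+1$ with $n$ atoms. Then for all $S\subseteq[r]$, $h_S(L)\le h_S(\mathscr{B}_{r+1,n})$.
   Context: A geometric lattice is a finite graded atomic lattice whose rank function $\rho$ satisfies $\rho(x\vee y)+\rho(x\wedge y)\le \rho(x)+\rho(y)$. For a graded poset $P$ of rank $r+1$ with $\hat 0,\hat 1$ and $S\subseteq[r]=\{1,\dots,r\}$, $f_S(P)$ is the number of chains in $P$ whose elements have ranks exactly the elements of $S$ (one element of each rank in $S$), and the flag $h$-vector is $h_S(P)=\sum_{T\subseteq S}(-1)^{|S|-|T|}f_T(P)$. The truncated Boolean algebra $\mathscr{B}_{r+1,n}$ ($n\ge r+1$) is the poset consisting of all subsets of $[n]$ of cardinality at most $r$, ordered by inclusion, together with an added maximum element $\hat 1$; it is the rank $r+1$ geometric lattice on $n$ atoms in which every $(r+1)$-subset of atoms is a basis. *)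

(* Defs.v *)
From HB Require Import structures.
From mathcomp Require Import all_boot all_order all_algebra.
Set Implicit Arguments. Unset Strict Implicit. Unset Printing Implicit Defensive.
Import Order.TTheory GRing.Theory Num.Theory.

(* A subset S of [r] = {1,...,r} is encoded
   as S : {set 'I_r}, the ordinal i standing for the rank i+1. *)

Definition is_chain (T : finType) (le : rel T) (C : {set T}) : bool :=
  [forall x in C, forall y in C, le x y || le y x].

Definition flag_chain (T : finType) (le : rel T) (rk : T -> nat) (r : nat)
    (S : {set 'I_r}) (C : {set T}) : bool :=
  [&& is_chain le C,
      [forall x in C, exists i in S, rk x == (val i).+1] &
      [forall i in S, #|[set x in C | rk x == (val i).+1]| == 1]].

Definition flag_f (T : finType) (le : rel T) (rk : T -> nat) (r : nat)
    (S : {set 'I_r}) : nat :=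
  #|[set C : {set T} | flag_chain le rk S C]|.

Definition flag_h (T : finType) (le : rel T) (rk : T -> nat) (r : nat)
    (S : {set 'I_r}) : int :=
  (\sum_(U : {set 'I_r} | U \subset S)
      (-1) ^+ (#|S| - #|U|) * (flag_f le rk U)%:Z)%R.

Section Geometric.
Context {d : Order.disp_t} {L : finTBLatticeType d}.
Local Open Scope order_scope.

Definition covers (x y : L) : bool :=
  (x < y) && [forall z : L, ~~ ((x < z) && (z < y))].

Definition is_atom (a : L) : bool := covers \bot a.

Definition is_rank_fun (rho : L -> nat) : Prop :=
  rho \bot = 0%N /\ forall x y : L, covers x y -> rho y = (rho x).+1.

Definition atomic : Prop :=
  forall x : L, x = \join_(a : L | is_atom a && (a <= x)) a.

Definition semimodular (rho : L -> nat) : Prop :=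
  forall x y : L, (rho (x `|` y) + rho (x `&` y) <= rho x + rho y)%N.

Definition geometric (rho : L -> nat) : Prop :=
  [/\ is_rank_fun rho, atomic & semimodular rho].

Definition n_atoms : nat := #|[set a : L | is_atom a]|.

End Geometric.

(* ---------- The truncated Boolean algebra B_{r+1,n} ----------
   Subsets of [n] (encoded as {set 'I_n}) of cardinality at most r,
   ordered by inclusion, plus an added maximum None. *)
Definition truncB (r n : nat) : finType :=
  option {A : {set 'I_n} | #|A| <= r}.

Definition truncB_le (r n : nat) : rel (truncB r n) :=
  fun x y => match x, y with
  | Some A, Some B => val A \subset val B
  | _, None => true
  | None, Some _ => false
  end.

Definition truncB_rk (r n : nat) (x : truncB r n) : nat :=
  match x with Some A => #|val A| | None => r.+1 end.

(* Main.v *)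
Require Import Defs.
From mathcomp Require Import all_boot all_order all_algebra.
From mathcomp Require Import zify.
Import Order.TTheory GRing.Theory Num.Theory.
Set Implicit Arguments. Unset Strict Implicit. Unset Printing Implicit Defensive.

Record Ax (T : finType) (le : rel T) (rk : T -> nat) (r : nat) (bot top : T)
  (atom : pred T) (nu : T -> nat) (jn : T -> T -> T) : Prop := MkAx {
  ax_leR : forall x, le x x;
  ax_leT : forall x y z, le x y -> le y z -> le x z;
  ax_leA : forall x y, le x y -> le y x -> x = y;
  ax_le0 : forall x, le bot x;
  ax_le1 : forall x, le x top;
  ax_rk0 : rk bot = 0;
  ax_rk1 : rk top = r.+1;
  ax_rkS : forall x y, le x y -> x != y -> rk x < rk y;
  ax_atomE : forall x y, le x y -> x != y -> exists a, [&& atom a, le a y & ~~ le a x];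
  ax_nu_inj : {in atom &, injective nu};
  ax_jn_l : forall x a, atom a -> le x (jn x a);
  ax_jn_r : forall x a, atom a -> le a (jn x a);
  ax_jn_lub : forall x a z, atom a -> le x z -> le a z -> le (jn x a) z;
  ax_jn_rk : forall x a, atom a -> ~~ le a x -> rk (jn x a) = (rk x).+1 }.

Lemma sgn_shift_int (a b : nat) : a = b.+1 -> ((-1) ^+ a = - ((-1) ^+ b) :> int)%R.
Proof. by move->; rewrite exprS mulN1r. Qed.

Lemma int_self_opp (x : int) : x = (- x)%R -> 0%R = x.
Proof. move=> h; rewrite /=; lia. Qed.

Section Core.
Variables (T : finType) (le : rel T) (rk : T -> nat) (r : nat) (bot top : T)
  (atom : pred T) (nu : T -> nat) (jn : T -> T -> T).
Variable ax : Ax le rk r bot top atom nu jn.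

Let leR := ax_leR ax.
Let leT := ax_leT ax.
Let leA := ax_leA ax.
Let le0 := ax_le0 ax.
Let le1 := ax_le1 ax.
Let rk0 := ax_rk0 ax.
Let rk1 := ax_rk1 ax.
Let rkS := ax_rkS ax.
Let atomE := ax_atomE ax.
Let nu_inj := ax_nu_inj ax.
Let jn_l := ax_jn_l ax.
Let jn_r := ax_jn_r ax.
Let jn_lub := ax_jn_lub ax.
Let jn_rk := ax_jn_rk ax.

Definition cand x y a := [&& atom a, le a y & ~~ le a x].
Definition ismin x y a := cand x y a && [forall b, cand x y b ==> (nu a <= nu b)].
Definition amin x y := odflt bot [pick a | ismin x y a].
Definition lab x y := nu (amin x y).

Lemma le_rk_eq x y : le x y -> rk x = rk y -> x = y.
Proof. by move=> h e; case: (eqVneq x y) => // /(rkS h); rewrite e ltnn. Qed.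

Lemma le_rk x y : le x y -> rk x <= rk y.
Proof. by move=> h; case: (eqVneq x y) => [->//|/(rkS h)/ltnW]. Qed.

Lemma amin_spec x y : (exists a, cand x y a) ->
  cand x y (amin x y) /\ forall b, cand x y b -> nu (amin x y) <= nu b.
Proof.
case=> a0 Ha0.
have [a Ha Hm] := @arg_minnP _ a0 (cand x y) nu Ha0.
rewrite /amin; case: pickP => [a' /andP[Ha' /forallP Hm']|/(_ a)] /=.
  by split=> // b Hb; exact: (implyP (Hm' b) Hb).
rewrite /ismin Ha /=; case/negP; apply/forallP => b; apply/implyP; exact: Hm.
Qed.

Lemma amin_eq x y a : cand x y a -> (forall b, cand x y b -> nu a <= nu b) -> amin x y = a.
Proof.
move=> Ha Hm; have [Hc Hm'] := amin_spec (ex_intro _ a Ha).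
have e : nu (amin x y) = nu a by apply/eqP; rewrite eqn_leq Hm' // Hm.
by apply: nu_inj e; [case/and3P: Hc | case/and3P: Ha].
Qed.

Lemma cand_ex x y : le x y -> rk x < rk y -> exists a, cand x y a.
Proof.
move=> h lt; apply: atomE h _; apply/eqP => e; by rewrite e ltnn in lt.
Qed.

Definition cov x y := le x y && (rk y == (rk x).+1).

Lemma cov_jn x y a : cov x y -> cand x y a -> y = jn x a.
Proof.
case/andP=> h /eqP e /and3P[Aa ay ax'].
apply/esym/le_rk_eq; first exact: jn_lub.
by rewrite jn_rk // e.
Qed.

Lemma cov_cand x y : cov x y -> cand x y (amin x y) /\ forall b, cand x y b -> nu (amin x y) <= nu b.
Proof. by case/andP=> h /eqP e; apply: amin_spec; apply: cand_ex; rewrite ?e. Qed.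

Lemma lab_det x y1 y2 : cov x y1 -> cov x y2 -> lab x y1 = lab x y2 -> y1 = y2.
Proof.
move=> c1 c2 e.
have [h1 _] := cov_cand c1; have [h2 _] := cov_cand c2.
have ea : amin x y1 = amin x y2.
  by apply: nu_inj e; [case/and3P: h1 | case/and3P: h2].
by rewrite (cov_jn c1 h1) (cov_jn c2 h2) ea.
Qed.

Lemma amin_jn x y : le x y -> rk x < rk y -> amin x (jn x (amin x y)) = amin x y.
Proof.
move=> h lt; have [Hc Hm] := amin_spec (cand_ex h lt).
case/and3P: (Hc) => Aa ay ax'.
apply: amin_eq; first by rewrite /cand Aa jn_r.
move=> b /and3P[Ab bj bx]; apply: Hm; rewrite /cand Ab bx andbT.
exact: leT bj (jn_lub Aa h ay).
Qed.

Lemma cand_jn x y : le x y -> rk x < rk y -> cov x (jn x (amin x y)).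
Proof.
move=> h lt; have [Hc _] := amin_spec (cand_ex h lt).
case/and3P: (Hc) => Aa ay ax'.
by rewrite /cov jn_l //= jn_rk.
Qed.

Definition pt (c : r.-tuple T) k := nth top (bot :: c) k.
Definition maxch (c : r.-tuple T) := [forall k : 'I_r.+1, cov (pt c k) (pt c k.+1)].
Definition lb c k := lab (pt c k) (pt c k.+1).
Definition D c := [set i : 'I_r | lb c i.+1 < lb c i].

Lemma pt0 c : pt c 0 = bot. Proof. by []. Qed.
Lemma ptr c k : r < k -> pt c k = top.
Proof. by move=> h; rewrite /pt nth_default //= size_tuple. Qed.

Lemma maxchP c : maxch c -> forall k, k <= r -> cov (pt c k) (pt c k.+1).
Proof. by move=> /forallP h k kr; exact: (h (Ordinal (kr : k < r.+1))). Qed.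

Lemma maxch_rk c : maxch c -> forall k, k <= r.+1 -> rk (pt c k) = k.
Proof.
move=> h; elim=> [|k IH] kr; first by rewrite pt0 rk0.
by case/andP: (maxchP h kr) => _ /eqP ->; rewrite IH // ltnW.
Qed.

Lemma maxch_le c : maxch c -> forall i j, i <= j -> le (pt c i) (pt c j).
Proof.
move=> h i; elim=> [|j IH]; first by rewrite leqn0 => /eqP ->.
rewrite leq_eqVlt => /orP[/eqP ->//|/IH hij].
case: (leqP j r) => jr; first by case/andP: (maxchP h jr) => hh _; exact: leT hij hh.
by rewrite (@ptr c j.+1) ?le1 // ltnS ltnW.
Qed.


Lemma KL c i j : maxch c -> i < j -> j <= r.+1 ->
  (forall t, i < t < j -> lb c t.-1 <= lb c t) ->
  pt c i.+1 = jn (pt c i) (amin (pt c i) (pt c j)).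
Proof.
move=> h ij jr hinc.
set x := pt c i; set y := pt c j.
have hxy : le x y by apply: maxch_le h _ _ (ltnW ij).
have rxy : rk x < rk y by rewrite /x /y !(maxch_rk h) //; lia.
have [Hc Hm] := amin_spec (cand_ex hxy rxy).
set a := amin x y in Hc Hm *.
case/and3P: (Hc) => Aa ay ax'.
have exP : exists k, (i < k) && le a (pt c k) by exists j; rewrite ij ay.
case: (ex_minnP exP) => k /andP[ik ak] kmin.
have kj : k <= j by apply: kmin; rewrite ij ay.
have labk : lb c k.-1 = nu a.
  rewrite /lb prednK ?(leq_ltn_trans (leq0n i) ik) //.
  rewrite /lab; congr nu; apply: amin_eq.
    rewrite /cand Aa ak /=.
    case: (eqVneq k.-1 i) => [->//|ne].
    have ik1 : i < k.-1 by lia.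
    apply/negP => ak1; have := kmin k.-1; rewrite ik1 ak1 => /(_ isT); lia.
  move=> b /and3P[Ab bk bk1]; apply: Hm; rewrite /cand Ab (leT bk (maxch_le h kj)) /=.
  apply: contra bk1 => bx; apply: leT bx (maxch_le h _); lia.
have inc : forall t, i < t <= k -> lb c i <= lb c t.-1.
  elim=> [|t IH] //; move=> /andP[it tk].
  case: (eqVneq t i) => [->//|ne].
  have it' : i < t by lia.
  apply: leq_trans (IH _) (hinc t _); lia.
have lbi : lb c i <= nu a by rewrite -labk; apply: inc; rewrite ik leqnn.
have ir : i <= r by lia.
have [Hb _] := cov_cand (maxchP h ir).
have Hb' : cand x y (amin x (pt c i.+1)).
  case/and3P: (Hb) => Ab bi bx; rewrite /cand Ab bx (leT bi (maxch_le h ij)).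
  done.
have e : nu (amin x (pt c i.+1)) = nu a.
  by apply/eqP; rewrite eqn_leq Hm // andbT.
have ea : amin x (pt c i.+1) = a.
  by apply: nu_inj e => //; case/and3P: Hb.
by apply: cov_jn (maxchP h ir) _; rewrite -ea.
Qed.

Lemma lab_top c m : maxch c -> m <= r ->
  (forall t, m < t <= r -> lb c t.-1 <= lb c t) -> lb c m = nu (amin (pt c m) top).
Proof.
move=> h mr hinc.
have e := @KL c m r.+1 h (mr : m < r.+1) (leqnn r.+1) (fun t ht => hinc t ht).
rewrite (@ptr c r.+1) // in e.
rewrite /lb /lab e amin_jn ?le1 //.
rewrite rk1 maxch_rk //; lia.
Qed.

Lemma lb_cand c k : maxch c -> k <= r -> cand (pt c k) (pt c k.+1) (amin (pt c k) (pt c k.+1)).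
Proof. by move=> h kr; case: (cov_cand (maxchP h kr)). Qed.

Lemma amin_neq c i j : maxch c -> i < j -> j <= r ->
  amin (pt c i) (pt c i.+1) != amin (pt c j) (pt c j.+1).
Proof.
move=> h ij jr; apply/eqP => e.
case/and3P: (lb_cand h (ltnW (leq_trans ij jr))) => _ ai _.
case/and3P: (lb_cand h jr) => _ _ /negP; apply; rewrite -e.
exact: leT ai (maxch_le h ij).
Qed.

Lemma lb_neq c i j : maxch c -> i < j -> j <= r -> lb c i != lb c j.
Proof.
move=> h ij jr; apply/eqP => e; case/eqP: (amin_neq h ij jr).
apply: nu_inj e.
  by case/and3P: (lb_cand h (ltnW (leq_trans ij jr))).
by case/and3P: (lb_cand h jr).
Qed.

Definition mkt (f : nat -> T) : r.-tuple T :=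
  @Tuple r T (mkseq f r) (introT eqP (size_mkseq f r)).

Lemma pt_mkt f : f 0 = bot -> f r.+1 = top ->
  forall k, k <= r.+1 -> pt (mkt (fun k => f k.+1)) k = f k.
Proof.
move=> f0 f1 [|k] kr; first by rewrite pt0.
rewrite /pt /=; case: (ltnP k r) => kr'; first by rewrite nth_mkseq.
have -> : k = r by lia.
by rewrite nth_default // size_mkseq.
Qed.

Lemma maxch_mkt f : f 0 = bot -> f r.+1 = top ->
  (forall k, k <= r -> cov (f k) (f k.+1)) -> maxch (mkt (fun k => f k.+1)).
Proof.
move=> f0 f1 h; apply/forallP => k; have k1 : (k <= r.+1)%N := ltnW (ltn_ord k).
have k2 : (k.+1 <= r.+1)%N := ltn_ord k; rewrite !pt_mkt //.
exact: h (ltn_ord k).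
Qed.

Lemma pt_inj c1 c2 : (forall k, pt c1 k = pt c2 k) -> c1 = c2.
Proof.
move=> e; apply: val_inj; apply: (@eq_from_nth _ top); rewrite ?size_tuple // => i _.
exact: (e i.+1).
Qed.

Fixpoint ext (f : nat -> T) (m : nat) k :=
  match k with
  | 0 => f 0
  | k'.+1 => if k'.+1 <= m then f k'.+1 else jn (ext f m k') (amin (ext f m k') top)
  end.

Lemma EXT f m : m <= r.+1 -> f 0 = bot -> (forall k, k < m -> cov (f k) (f k.+1)) ->
  exists c, [/\ maxch c, forall k, k <= m -> pt c k = f k &
                forall t, m < t <= r -> lb c t.-1 <= lb c t].
Proof.
move=> mr f0 hf.
pose g := ext f m.
have gf : forall k, k <= m -> g k = f k.
  by case=> //= k km; rewrite /g /= km.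
have grk : forall k, k <= r.+1 -> rk (g k) = k.
  elim=> [|k IH] kr; first by rewrite /g /= f0 rk0.
  rewrite /g /=; case: ifP => km.
    case/andP: (hf k km) => _ /eqP ->; rewrite -gf ?IH //; lia.
  have rk' : rk (g k) < rk top by rewrite rk1 IH //; lia.
  have [Hc _] := amin_spec (cand_ex (le1 (g k)) rk').
  case/and3P: Hc => Aa _ ax'.
  by rewrite jn_rk // -/(g k) IH //; lia.
have gcov : forall k, k <= r -> cov (g k) (g k.+1).
  move=> k kr; rewrite {2}/g /=; case: ifP => km.
    rewrite gf; [exact: hf | lia].
  apply: cand_jn; first exact: le1.
  by rewrite rk1 grk //; lia.
have g1 : g r.+1 = top by apply: le_rk_eq; [exact: le1 | rewrite grk].
have ptc : forall k, k <= r.+1 -> pt (mkt (fun k => g k.+1)) k = g k.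
  by apply: pt_mkt.
exists (mkt (fun k => g k.+1)); split.
- exact: maxch_mkt.
- by move=> k km; rewrite ptc ?gf // (leq_trans km mr).
have lbt : forall t, m <= t <= r -> lb (mkt (fun k => g k.+1)) t = nu (amin (g t) top).
  move=> t /andP[mt tr]; rewrite /lb !ptc //; last by lia.
  rewrite [g t.+1]/g /=; case: ifP => tm; first by lia.
  rewrite /lab amin_jn ?le1 //.
  rewrite rk1 grk //; lia.
move=> t /andP[mt tr]; rewrite !lbt; try lia.
have rk' : rk (g t) < rk top by rewrite rk1 grk //; lia.
have [Hc _] := amin_spec (cand_ex (le1 (g t)) rk').
have rk'' : rk (g t.-1) < rk top by rewrite rk1 grk //; lia.
have [_ Hm] := amin_spec (cand_ex (le1 (g t.-1)) rk'').
apply: Hm; case/and3P: Hc => Aa at' ax'; rewrite /cand Aa at' /=.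
apply: contra ax' => h'; apply: leT h' _.
case/andP: (gcov t.-1 (leq_trans (leq_pred t) tr)) => hh _.
by rewrite prednK in hh; [ | lia].
Qed.


Lemma ord_le (i : 'I_r) : (val i).+1 <= r.+1.
Proof. exact: ltnW (ltn_ord i). Qed.

Definition psi c (T0 : {set 'I_r}) := [set pt c (val i).+1 | i in T0].

Lemma flag_psi c T0 : maxch c -> flag_chain le rk T0 (psi c T0).
Proof.
move=> h; apply/and3P; split.
- apply/forallP => x; apply/implyP => /imsetP[i _ ->].
  apply/forallP => y; apply/implyP => /imsetP[j _ ->].
  case: (leqP (val i) (val j)) => hij; first by rewrite maxch_le.
  by rewrite orbC maxch_le // ltnW.
- apply/forallP => x; apply/implyP => /imsetP[i Hi ->].
  have ir := ord_le i.
  by apply/existsP; exists i; rewrite Hi (maxch_rk h ir) eqxx.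
- apply/forallP => i; apply/implyP => Hi.
  have ir := ord_le i.
  rewrite (_ : [set x in psi c T0 | rk x == (val i).+1] = [set pt c (val i).+1]) ?cards1 //.
  apply/setP => x; rewrite !inE; apply/andP/eqP => [[/imsetP[j Hj ->]]|->].
    have jr := ord_le j.
    by rewrite maxch_rk // eqSS => /eqP e; rewrite (ord_inj e).
  by split; [apply: imset_f | rewrite maxch_rk].
Qed.

Definition inT (T0 : {set 'I_r}) t := [exists i in T0, (val i).+1 == t].

Lemma noD (T0 : {set 'I_r}) c : maxch c -> D c \subset T0 ->
  forall t, 0 < t <= r -> ~~ inT T0 t -> lb c t.-1 <= lb c t.
Proof.
move=> h d t /andP[t0 tr] nt.
have tr' : t.-1 < r by lia.
have : Ordinal tr' \notin D c.
  apply: contra nt => /(subsetP d) Hi; apply/existsP; exists (Ordinal tr').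
  by rewrite Hi /= prednK.
by rewrite inE -leqNgt /= prednK.
Qed.

Lemma psi_inj (T0 : {set 'I_r}) c1 c2 : maxch c1 -> maxch c2 -> D c1 \subset T0 -> D c2 \subset T0 ->
  psi c1 T0 = psi c2 T0 -> c1 = c2.
Proof.
move=> h1 h2 d1 d2 e; apply: pt_inj.
elim=> [|k IH] //.
case: (leqP k r) => kr; last first.
  have hk : r < k.+1 by lia.
  by rewrite !(ptr _ hk).
have exP : exists t, (k < t) && ((t == r.+1) || inT T0 t).
  by exists r.+1; rewrite ltnS kr eqxx.
case: (ex_minnP exP) => j /andP[kj Pj] jmin.
have jr : j <= r.+1 by apply: jmin; rewrite ltnS kr eqxx.
have ej : pt c1 j = pt c2 j.
  case/orP: Pj => [/eqP ->| /existsP[i /andP[Hi /eqP ei]]].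
    by rewrite !(ptr _ (ltnSn r)).
  have : pt c1 j \in psi c1 T0 by rewrite -ei; apply: imset_f.
  rewrite e => /imsetP[i' Hi' e'].
  have i'r := ord_le i'.
  have ej : j = (val i').+1.
    by have := maxch_rk h1 jr; rewrite e' maxch_rk.
  by rewrite e' ej.
have hinc : forall c, maxch c -> D c \subset T0 -> forall t, k < t < j -> lb c t.-1 <= lb c t.
  move=> c h d t /andP[kt tj]; apply: (noD h d); first lia.
  apply/negP => it; have := jmin t; rewrite kt it orbT => /(_ isT); lia.
by rewrite (KL h1 kj jr (hinc _ h1 d1)) (KL h2 kj jr (hinc _ h2 d2)) IH ej.
Qed.


Definition tg (C : {set T}) k :=
  odflt top [pick x in C | (k <= rk x) && [forall y in C, (k <= rk y) ==> (rk x <= rk y)]].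

Lemma tgP C k : (tg C k = top /\ forall y, y \in C -> rk y < k) \/
  [/\ tg C k \in C, k <= rk (tg C k) & forall y, y \in C -> k <= rk y -> rk (tg C k) <= rk y].
Proof.
rewrite /tg; case: pickP => [x /andP[xC /andP[kx /forallP hm]]|none] /=.
  by right; split=> // y yC ky; have := hm y; rewrite yC ky.
left; split=> // y yC; rewrite ltnNge; apply/negP => ky.
have Py : (y \in C) && (k <= rk y) by rewrite yC.
have [z /andP[zC kz] zm] := @arg_minnP _ y (fun y => (y \in C) && (k <= rk y)) rk Py.
have := none z; rewrite zC kz /=; case/negP; apply/forallP => w.
by apply/implyP => wC; apply/implyP => kw; apply: zm; rewrite wC.
Qed.

Section Surj.
Variables (T0 : {set 'I_r}) (C : {set T}).
Hypothesis fc : flag_chain le rk T0 C.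

Lemma fc_chain x y : x \in C -> y \in C -> rk x <= rk y -> le x y.
Proof.
case/and3P: fc => ch _ _ xC yC rxy.
have := forallP ch x; rewrite xC /= => /forallP/(_ y); rewrite yC /= => /orP[hh|yx]; first exact: hh.
have e : y = x.
  apply: le_rk_eq; first exact: yx.
  by apply/eqP; rewrite eqn_leq (le_rk yx) rxy.
by rewrite e leR.
Qed.

Lemma fc_uniq x y : x \in C -> y \in C -> rk x = rk y -> x = y.
Proof. by move=> xC yC e; apply: leA; apply: fc_chain; rewrite // e. Qed.

Lemma fc_rk x : x \in C -> exists2 i : 'I_r, i \in T0 & rk x = (val i).+1.
Proof.
case/and3P: fc => _ h2 _ xC.
by have := forallP h2 x; rewrite xC /= => /existsP[i /andP[Hi /eqP e]]; exists i.
Qed.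

Lemma fc_ex (i : 'I_r) : i \in T0 -> exists2 x, x \in C & rk x = (val i).+1.
Proof.
case/and3P: fc => _ _ h3 Hi.
have := forallP h3 i; rewrite Hi /= => /cards1P[x ex].
have : x \in [set x in C | rk x == (val i).+1] by rewrite ex set11.
by rewrite inE => /andP[xC /eqP e]; exists x.
Qed.

Lemma tg_rk k : k <= r.+1 -> k <= rk (tg C k).
Proof. by move=> kr; case: (tgP C k) => [[-> _]|[_ ? _]] //; rewrite rk1. Qed.

Lemma tg_mono k k' : k <= k' -> le (tg C k) (tg C k').
Proof.
move=> kk.
case: (tgP C k') => [[-> _]|[xC kx _]]; first exact: le1.
case: (tgP C k) => [[_ none]|[yC ky ym]].
  by have := none _ xC; lia.
by apply: fc_chain yC xC (ym _ xC _); lia.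
Qed.

Lemma tg_S k : k < rk (tg C k) -> tg C k = tg C k.+1.
Proof.
case: (tgP C k) => [[e none]|[xC kx xm]] lt.
  case: (tgP C k.+1) => [[e' _]|[yC ky _]]; first by rewrite e e'.
  by have := none _ yC; lia.
case: (tgP C k.+1) => [[_ none]|[yC ky ym]].
  by have := none _ xC; lia.
apply: (fc_uniq xC yC); apply/eqP; rewrite eqn_leq; apply/andP; split; [apply: (xm _ yC) | apply: (ym _ xC)]; lia.
Qed.

Lemma tg_T0 (i : 'I_r) : i \in T0 -> tg C (val i).+1 \in C /\ rk (tg C (val i).+1) = (val i).+1.
Proof.
move=> Hi; have [x xC rx] := fc_ex Hi.
case: (tgP C (val i).+1) => [[_ none]|[yC ky ym]].
  by have := none _ xC; lia.
have := ym _ xC; rewrite rx leqnn => /(_ isT) h.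
by split=> //; apply/eqP; rewrite eqn_leq h ky.
Qed.

Fixpoint gch k := match k with 0 => bot | k'.+1 => jn (gch k') (amin (gch k') (tg C k'.+1)) end.

Lemma g_inv k : k <= r.+1 -> rk (gch k) = k /\ le (gch k) (tg C k).
Proof.
elim: k => [|k IH] kr; first by rewrite /= rk0 le0.
have [rg lg] := IH (ltnW kr).
have l1 : le (gch k) (tg C k.+1) := leT lg (tg_mono (leqnSn k)).
have r1 : rk (gch k) < rk (tg C k.+1) by rewrite rg; apply: (tg_rk kr).
have [Hc _] := amin_spec (cand_ex l1 r1).
case/and3P: (Hc) => Aa ay ax'.
by rewrite /= jn_rk // rg; split=> //; apply: jn_lub.
Qed.

Lemma g_aux k : k <= r -> le (gch k) (tg C k.+1) /\ rk (gch k) < rk (tg C k.+1).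
Proof.
move=> kr; have [rg lg] := g_inv (leqW kr).
split; first exact: leT lg (tg_mono (leqnSn k)).
by rewrite rg; apply: (@tg_rk k.+1 kr).
Qed.

Lemma g_cov k : k <= r -> cov (gch k) (gch k.+1).
Proof. by move=> kr; have [l1 r1] := g_aux kr; exact: cand_jn. Qed.

Lemma g_lab k : k <= r -> lab (gch k) (gch k.+1) = nu (amin (gch k) (tg C k.+1)).
Proof. by move=> kr; have [l1 r1] := g_aux kr; rewrite /lab /= amin_jn. Qed.

Lemma g1 : gch r.+1 = top.
Proof. by apply: le_rk_eq; [exact: le1 | rewrite rk1; case: (g_inv (leqnn _))]. Qed.

Lemma g_tg (i : 'I_r) : i \in T0 -> gch (val i).+1 = tg C (val i).+1.
Proof.
move=> Hi; have [tC rtg] := tg_T0 Hi.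
have [rg lg] := g_inv (ord_le i).
by apply: le_rk_eq lg _; rewrite rg rtg.
Qed.

Lemma psi_surj : exists c, [/\ maxch c, D c \subset T0 & psi c T0 = C].
Proof.
pose c := mkt (fun k => gch k.+1).
have ptc : forall k, k <= r.+1 -> pt c k = gch k := pt_mkt (f:=gch) erefl g1.
exists c; split.
- exact: maxch_mkt erefl g1 g_cov.
- apply/subsetP => p; rewrite inE; apply: contraTT => pT.
  rewrite -leqNgt.
  have tr : p.+1 <= r := ltn_ord p.
  have rt : p.+1 < rk (tg C p.+1).
    case: (tgP C p.+1) => [[-> _]|[xC kx _]]; first by rewrite rk1 ltnS.
    rewrite ltn_neqAle kx andbT; apply/eqP => e.
    have [i Hi ei] := fc_rk xC.
    have pi : p = i by apply: ord_inj; rewrite -e in ei; case: ei.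
    by rewrite pi Hi in pT.
  have e := tg_S rt.
  rewrite /lb !ptc //; try lia.
  rewrite !g_lab //; try lia.
  rewrite -e.
  have [l1 r1] := g_aux tr; rewrite -e in l1 r1.
  have [Hc _] := amin_spec (cand_ex l1 r1).
  have [l2 r2] := g_aux (ltnW tr).
  have [_ Hm] := amin_spec (cand_ex l2 r2).
  apply: Hm; case/and3P: Hc => Aa at' ax'; rewrite /cand Aa at' /=.
  apply: contra ax' => h'.
  by apply: leT h' _; case/andP: (g_cov (ltnW tr)).
- apply/setP => x; apply/imsetP/idP.
  + case=> i Hi ->; have [tC rtg] := tg_T0 Hi.
    by rewrite ptc ?ord_le // g_tg.
  + move=> xC; have [i Hi rx] := fc_rk xC; exists i => //.
    have [tC rtg] := tg_T0 Hi.
    rewrite ptc ?ord_le // g_tg //; apply: fc_uniq xC tC _; by rewrite rx rtg.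
Qed.

End Surj.

Lemma F (T0 : {set 'I_r}) : flag_f le rk T0 = #|[set c | maxch c && (D c \subset T0)]|.
Proof.
rewrite /flag_f -(@card_in_imset _ _ (fun c => psi c T0) [set c | maxch c && (D c \subset T0)]).
  apply: eq_card => C; rewrite [in LHS]inE; apply/idP/imsetP.
  - by case/psi_surj => c [h d e]; exists c; rewrite ?inE ?h ?d.
  - by case=> c; rewrite inE => /andP[h _] ->; apply: flag_psi.
move=> c1 c2; rewrite !inE => /andP[h1 d1] /andP[h2 d2]; exact: psi_inj.
Qed.


Lemma cardZ (X : finType) (P : pred X) :
  Posz #|[set c | P c]| = (\sum_(c | P c) (1 : int))%R.
Proof.
rewrite cardsE -sum1_card (big_morph Posz PoszD (erefl (Posz 0))).
by apply: eq_bigl => c.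
Qed.

Lemma alt_sum (I : finType) (X S : {set I}) :
  (\sum_(U : {set I} | (U \subset S) && (X \subset U)) ((-1) ^+ (#|S| - #|U|) : int))%R
  = if X == S then 1%R else 0%R.
Proof.
case: eqVneq => [->|ne].
  rewrite (big_pred1 S) ?subnn ?expr0 // => U; rewrite /= -eqEsubset.
  done.
case: (boolP (X \subset S)) => XS; last first.
  rewrite big_pred0 // => U; apply/negP => /andP[US XU]; case/negP: XS.
  exact: subset_trans XU US.
have : X \proper S by rewrite properEneq ne XS.
case/properP => _ [s sS sX].
pose phi := fun U : {set I} => if s \in U then U :\ s else s |: U.
have phiK : involutive phi.
  move=> U; rewrite /phi; case sU: (s \in U).
    by rewrite setD11 setD1K.
  by rewrite setU11 setU1K ?sU.
pose P := fun U : {set I} => (U \subset S) && (X \subset U).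
pose G := fun U : {set I} => ((-1) ^+ (#|S| - #|U|) : int)%R.
have e1 : (\sum_(U | P U) G U = \sum_(U | P (phi U)) G (phi U))%R.
  exact: (reindex_inj (can_inj phiK)).
have e2 : (\sum_(U | P (phi U)) G (phi U) = \sum_(U | P U) - G U)%R.
  transitivity (\sum_(U | P U) G (phi U))%R.
    apply: eq_bigl => U.
    rewrite /P /phi; case: ifP => sU.
      rewrite subsetD1 sX andbT subDset (setUidPr _) //.
      by rewrite sub1set.
    rewrite subUset sub1set sS /=; congr andb.
    apply/idP/idP => [h|h]; last exact: subset_trans h (subsetU1 _ _).
    apply/subsetP => x xX; have := subsetP h x xX; rewrite in_setU1.
    case/orP => [/eqP e|//]; by rewrite -e xX in sX.
  apply: eq_bigr => U /andP[US XU]; rewrite /G /phi; case: ifP => sU.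
    apply: sgn_shift_int.
    have := cardsD1 s U; rewrite sU /= => hc.
    have := subset_leq_card US; lia.
  have hsub : s |: U \subset S by rewrite subUset sub1set sS.
  have := subset_leq_card hsub; rewrite cardsU1 sU /= => hc.
  rewrite (@sgn_shift_int (#|S| - #|U|) (#|S| - (1 + #|U|))) ?GRing.opprK //; lia.
have : (\sum_(U | P U) G U = - \sum_(U | P U) G U)%R.
  by rewrite {1}e1 e2 sumrN.
rewrite /P /G => h; exact/esym/int_self_opp.
Qed.


Lemma H (S : {set 'I_r}) : flag_h le rk S = Posz #|[set c | maxch c && (D c == S)]|.
Proof.
rewrite /flag_h.
transitivity (\sum_(U : {set 'I_r} | U \subset S)
   \sum_(c | maxch c && (D c \subset U)) ((-1) ^+ (#|S| - #|U|) : int))%R.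
  apply: eq_bigr => U _; rewrite F cardZ GRing.mulr_sumr.
  by apply: eq_bigr => c _; rewrite GRing.mulr1.
rewrite cardZ.
under eq_bigr do rewrite big_mkcond /=.
rewrite exchange_big /= [RHS]big_mkcond /=.
apply: eq_bigr => c _.
case: (boolP (maxch c)) => hc /=.
  by rewrite -big_mkcondr /= alt_sum.
by rewrite big1.
Qed.


Lemma atoms_ge c : maxch c -> r.+1 <= #|[set a | atom a]|.
Proof.
move=> h.
pose f := fun k : 'I_r.+1 => amin (pt c k) (pt c k.+1).
have inj : injective f.
  move=> i j e; rewrite /f in e; apply/val_inj; case: (ltngtP i j) => [ij|ji|//].
    by move: (amin_neq h ij (ltn_ord j)); rewrite e eqxx.
  by move: (amin_neq h ji (ltn_ord i)); rewrite e eqxx.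
rewrite -{1}(card_ord r.+1) -(card_imset (mem 'I_r.+1) inj).
apply: subset_leq_card; apply/subsetP => a /imsetP[k _ ->]; rewrite inE.
by case/and3P: (lb_cand h (ltn_ord k)).
Qed.


Lemma noDesc c (S : {set 'I_r}) (i0 : 'I_r) : D c = S ->
  (forall i : 'I_r, i \in S -> i <= i0) ->
  forall t, i0.+1 < t <= r -> lb c t.-1 <= lb c t.
Proof.
move=> e hm t /andP[it tr]; have tr' : t.-1 < r by lia.
have : Ordinal tr' \notin D c by rewrite e; apply/negP => /hm /=; lia.
by rewrite inE -leqNgt /= prednK //; lia.
Qed.

End Core.

Lemma flag_h0 (T : finType) (le : rel T) (rk : T -> nat) (r : nat) :
  flag_h le rk (set0 : {set 'I_r}) = 1%R.
Proof.
rewrite /flag_h (big_pred1 set0) => [|U]; last by rewrite /= subset0.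
rewrite cards0 subnn GRing.expr0 GRing.mul1r /flag_f.
rewrite (_ : [set C | flag_chain le rk set0 C] = [set set0]) ?cards1 //.
apply/setP => C; rewrite !inE; apply/idP/eqP => [/and3P[_ h _]|->].
  apply/setP => x; rewrite inE; apply/negP => xC.
  by have := forallP h x; rewrite xC /= => /existsP[i]; rewrite inE.
by apply/and3P; split; apply/forallP => x; rewrite inE.
Qed.


Lemma card_le_rel (X Y : finType) (A : {set X}) (B : {set Y}) (R : X -> Y -> bool) :
  (forall x, x \in A -> exists2 y, y \in B & R x y) ->
  (forall x1 x2 y, x1 \in A -> x2 \in A -> R x1 y -> R x2 y -> x1 = x2) ->
  #|A| <= #|B|.
Proof.
move=> ex un.
pose f x := [pick y in B | R x y].
have fS : forall x, x \in A -> exists2 y, f x = Some y & (y \in B) && R x y.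
  move=> x xA; rewrite /f; case: pickP => [y hy|none]; first by exists y.
  by have [y yB Ry] := ex _ xA; have := none y; rewrite yB Ry.
have finj : {in A &, injective f}.
  move=> x1 x2 h1 h2 e.
  have [y1 e1 /andP[_ R1]] := fS _ h1.
  have [y2 e2 /andP[_ R2]] := fS _ h2.
  rewrite e1 e2 in e; case: e => e; rewrite -e in R2.
  exact: un h1 h2 R1 R2.
rewrite -(card_in_imset finj).
have -> : #|B| = #|[set Some y | y in B]| by rewrite card_imset //; exact: Some_inj.
apply: subset_leq_card; apply/subsetP => o /imsetP[x xA ->].
have [y -> /andP[yB _]] := fS _ xA.
exact: imset_f.
Qed.

Section LInst.
Context {d : Order.disp_t} {L : finTBLatticeType d}.

Lemma lt_proper (z w : L) : (z < w)%O -> [set v | (v < z)%O] \proper [set v | (v < w)%O].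
Proof.
move=> zw; rewrite properE; apply/andP; split.
  by apply/subsetP => v; rewrite !inE => vz; exact: lt_trans vz zw.
by apply/subsetPn; exists z; rewrite !inE ?ltxx.
Qed.

Lemma rho_lt (rho : L -> nat) : is_rank_fun rho -> forall x y : L, (x < y)%O -> rho x < rho y.
Proof.
move=> [_ hc].
suff: forall n (y : L), #|[set w : L | (w < y)%O]| <= n -> forall x, (x < y)%O -> rho x < rho y.
  by move=> h x y xy; exact: h _ _ (leqnn _) _ xy.
elim=> [|n IH] y.
  rewrite leqn0 => /eqP/cards0_eq e x xy.
  have : x \in [set w | (w < y)%O] by rewrite inE.
  by rewrite e inE.
move=> hn x xy.
pose Z := fun z : L => (x <= z)%O && (z < y)%O.
have Zx : Z x by rewrite /Z lexx xy.
have [z /andP[xz zy] zmax] := @arg_maxnP _ x Z (fun z => #|[set w : L | (w < z)%O]|) Zx.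
have cz : covers z y.
  rewrite /covers zy /=; apply/forallP => w; apply/negP => /andP[zw wy].
  have := zmax w; rewrite /Z (le_trans xz (ltW zw)) wy => /(_ isT).
  by apply/negP; rewrite -ltnNge; apply: proper_card; apply: lt_proper.
rewrite (hc _ _ cz).
case: (eqVneq x z) => [->//|nxz].
have xz' : (x < z)%O by rewrite lt_neqAle nxz xz.
have hz : #|[set w : L | (w < z)%O]| <= n.
  by rewrite -ltnS; apply: leq_trans hn; apply: proper_card; apply: lt_proper.
by apply: ltnW; apply: (IH z hz x xz').
Qed.

Definition nuL (a : L) : nat := index a (enum [set b : L | is_atom b]).

Variables (rho : L -> nat) (r : nat).
Hypothesis geo : geometric rho.
Hypothesis rtop : rho \top%O = r.+1.

Lemma axL : Ax (<=%O : rel L) rho r \bot%O \top%O is_atom nuL Order.join.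
Proof.
case: geo => [[r0 hc] atm sm].
have rlt := rho_lt (conj r0 hc).
split.
- exact: lexx.
- move=> x y z; exact: le_trans.
- by move=> x y h1 h2; apply: le_anti; rewrite h1 h2.
- exact: le0x.
- exact: lex1.
- exact: r0.
- exact: rtop.
- by move=> x y xy nxy; apply: rlt; rewrite lt_neqAle nxy xy.
- move=> x y xy nxy.
  case: (pickP (fun a => [&& is_atom a, (a <= y)%O & ~~ (a <= x)%O])) => [a Ha|none].
    by exists a.
  case/eqP: nxy; apply: le_anti; rewrite xy /=.
  rewrite {1}(atm y); apply/joinsP => a /andP[Aa ay].
  by have := none a; rewrite Aa ay /= => /negbFE.
- move=> a b; rewrite !unfold_in => Aa Ab e.
  have ha : a \in enum [set b : L | is_atom b] by rewrite mem_enum inE.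
  have hb : b \in enum [set b : L | is_atom b] by rewrite mem_enum inE.
  by rewrite -(nth_index \bot%O ha) -(nth_index \bot%O hb); congr nth.
- by move=> x a _; exact: leUl.
- by move=> x a _; exact: leUr.
- by move=> x a z _ xz az; rewrite leUx xz az.
- move=> x a Aa ax.
  have ra : rho a = 1 by rewrite (hc _ _ Aa) r0.
  have mb : (x `&` a = \bot)%O.
    case/andP: (Aa) => ba /forallP hz.
    apply/eqP; apply: contraT => ne.
    have := hz (x `&` a)%O; rewrite lt_neqAle eq_sym ne le0x /=.
    rewrite lt_neqAle leIr andbT; case/negP; apply/negP => /eqP e.
    by case/negP: ax; rewrite -e leIl.
  have := sm x a; rewrite mb r0 ra addn0 => h1.
  have h2 : rho x < rho (x `|` a)%O.
    apply: rlt; rewrite lt_neqAle leUl andbT; apply/negP => /eqP e.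
    by case/negP: ax; rewrite e leUr.
  by apply/eqP; rewrite eqn_leq -addn1 h1 /= addn1 h2.
Qed.

Lemma nuL_lt (a : L) : is_atom a -> nuL a < n_atoms (L:=L).
Proof. by move=> Aa; rewrite /n_atoms cardE index_mem mem_enum inE. Qed.

End LInst.

Section BInst.
Variables (r n : nat).

Lemma card0r : #|(set0 : {set 'I_n})| <= r.
Proof. by rewrite cards0. Qed.

Definition botB : truncB r n :=
  Some (@exist _ (fun A : {set 'I_n} => #|A| <= r) set0 card0r).
Definition topB : truncB r n := None.
Definition atomB (x : truncB r n) : bool := truncB_rk x == 1.
Definition nuB (x : truncB r n) : nat :=
  if x is Some A then \sum_(i in val A) (val i) else 0.
Definition jnB (x y : truncB r n) : truncB r n :=
  match x, y with
  | Some A, Some B => insub (val A :|: val B)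
  | _, _ => None
  end.

Lemma insub_some (X : {set 'I_n}) : #|X| <= r ->
  exists A : {A : {set 'I_n} | #|A| <= r}, insub X = Some A /\ val A = X.
Proof. by move=> h; rewrite insubT; eexists; split. Qed.

Hypothesis r0 : 0 < r.
Hypothesis rn : r < n.

Lemma axB : Ax (@truncB_le r n) (@truncB_rk r n) r botB topB atomB nuB jnB.
Proof.
split.
- by case=> [A|] //=; exact: subxx.
- by case=> [A|] [B|] [C|] //=; exact: subset_trans.
- case=> [A|] [B|] //= h1 h2; congr Some; apply: val_inj; apply/eqP.
  by rewrite eqEsubset h1 h2.
- by case=> [A|] //=; exact: sub0set.
- by case.
- exact: cards0.
- by [].
- case=> [A|] [B|] //= h ne.
  + apply: proper_card; rewrite properEneq h andbT; apply: contra ne => /eqP e.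
    by apply/eqP; congr Some; apply: val_inj.
  + by rewrite ltnS; exact: (valP A).
- case=> [A|] [B|] //= h ne.
  + have : val A \proper val B.
      rewrite properEneq h andbT; apply: contra ne => /eqP e.
      by apply/eqP; congr Some; apply: val_inj.
    case/properP => _ [i iB iA].
    have hc1 : #|[set i]| <= r by rewrite cards1.
    have [S1 [e1 v1]] := insub_some hc1.
    exists (Some S1); rewrite /atomB /= v1 cards1 eqxx /= !sub1set iB.
    exact: iA.
  + have : 0 < #|~: val A|.
      have := cardsC (val A); rewrite card_ord; have := valP A; rewrite /=; lia.
    case/card_gt0P => i; rewrite inE => iA.
    have hc1 : #|[set i]| <= r by rewrite cards1.
    have [S1 [e1 v1]] := insub_some hc1.
    by exists (Some S1); rewrite /atomB /= v1 cards1 eqxx /= !sub1set.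
- move=> [A|] [B|] hA hB e.
  + have /cards1P[i ei] : #|val A| == 1 := hA.
    have /cards1P[j ej] : #|val B| == 1 := hB.
    move: e; rewrite /nuB ei ej !big_set1 => e.
    by congr Some; apply: val_inj; rewrite ei ej (ord_inj e).
  + have : truncB_rk (None : truncB r n) == 1 := hB. move=> /eqP /=; lia.
  + have : truncB_rk (None : truncB r n) == 1 := hA. move=> /eqP /=; lia.
  + have : truncB_rk (None : truncB r n) == 1 := hA. move=> /eqP /=; lia.
- move=> [A|] [B|] //=; rewrite /atomB /=.
  by move=> _; case: insubP => [C _ vC|] //=; rewrite vC subsetUl.
- move=> [A|] [B|] //=; rewrite /atomB /=.
  by move=> _; case: insubP => [C _ vC|] //=; rewrite vC subsetUr.
- move=> [A|] [B|] [Z|] //=; rewrite /atomB /=.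
  + move=> _ hA hB; case: insubP => [C _ vC|hN] /=; first by rewrite vC subUset hA hB.
    case/negP: hN; apply: leq_trans (valP Z); apply: subset_leq_card.
    by rewrite subUset hA hB.
  + by move=> _ _ _; case: (insub _).
- move=> [A|] [B|] //=; rewrite /atomB /=.
  + move=> /cards1P[i ei]; rewrite ei sub1set => iA.
    case: insubP => [C hC vC|hN] /=.
      by rewrite vC setUC cardsU1 iA.
    move: hN; rewrite setUC cardsU1 iA /=; have := valP A; rewrite /=; lia.
  + move=> /eqP; lia.
Qed.

End BInst.

Section Two.
Variables (T1 : finType) (le1 : rel T1) (rk1 : T1 -> nat) (r : nat) (bot1 top1 : T1)
  (atom1 : pred T1) (nu1 : T1 -> nat) (jn1 : T1 -> T1 -> T1).
Variable ax1 : Ax le1 rk1 r bot1 top1 atom1 nu1 jn1.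
Variables (T2 : finType) (le2 : rel T2) (rk2 : T2 -> nat) (bot2 top2 : T2)
  (atom2 : pred T2) (nu2 : T2 -> nat) (jn2 : T2 -> T2 -> T2).
Variable ax2 : Ax le2 rk2 r bot2 top2 atom2 nu2 jn2.

Local Notation maxch1 := (@maxch _ le1 rk1 r bot1 top1).
Local Notation maxch2 := (@maxch _ le2 rk2 r bot2 top2).
Local Notation lb1 := (@lb _ le1 r bot1 top1 atom1 nu1).
Local Notation lb2 := (@lb _ le2 r bot2 top2 atom2 nu2).
Local Notation D1 := (@D _ le1 r bot1 top1 atom1 nu1).
Local Notation D2 := (@D _ le2 r bot2 top2 atom2 nu2).
Local Notation pt1 := (@pt _ r bot1 top1).
Local Notation pt2 := (@pt _ r bot2 top2).

Hypothesis realize : forall c, maxch1 c -> forall m, m <= r ->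
  exists f : nat -> T2, [/\ f 0 = bot2,
     forall k, k < m -> cov le2 rk2 (f k) (f k.+1),
     forall k, k < m -> lab le2 bot2 atom2 nu2 (f k) (f k.+1) = lb1 c k &
     nu2 (amin le2 bot2 atom2 nu2 (f m) top2) <= nu1 (amin le1 bot1 atom1 nu1 (pt1 c m) top1)].

Lemma INJ (S : {set 'I_r}) : S != set0 ->
  #|[set c | maxch1 c && (D1 c == S)]| <= #|[set c | maxch2 c && (D2 c == S)]|.
Proof.
move=> S0.
have [j Sj] := set0Pn _ S0.
have [i0 Si0 i0max] := @arg_maxnP _ j (fun i => i \in S) (fun i : 'I_r => nat_of_ord i) Sj.
have mr : i0.+1 <= r := ltn_ord i0.
pose R := fun (c : r.-tuple T1) (c' : r.-tuple T2) =>
  [forall k : 'I_r.+1, (k < i0.+1) ==> (lb2 c' k == lb1 c k)].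
apply: (card_le_rel (R := R)).
- move=> c; rewrite inE => /andP[hc /eqP Dc].
  have [f [f0 fcov flab fnu]] := realize hc mr.
  have [c' [hc' pc' inc']] := EXT ax2 (leqW mr) f0 fcov.
  have lbc' : forall k, k < i0.+1 -> lb2 c' k = lb1 c k.
    by move=> k km; rewrite -(flab k km) /lb (pc' k (ltnW km)) (pc' k.+1 km).
  exists c'; last first.
    by apply/forallP => k; apply/implyP => km; rewrite lbc'.
  rewrite inE hc' /=; apply/eqP/setP => p.
  case: (ltngtP p i0) => [pi|ip|pe].
  + by rewrite -Dc !inE !lbc' //; lia.
  + have pS : p \notin S by apply/negP => /i0max; lia.
    rewrite (negPf pS); apply/negbTE; rewrite inE -leqNgt.
    by apply: (inc' p.+1); apply/andP; split; [lia | exact: ltn_ord].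
  + have -> : p = i0 by apply: val_inj.
    rewrite Si0 inE.
    have e1 := lab_top ax2 hc' mr inc'.
    have e2 := lab_top ax1 hc mr (noDesc ax1 Dc i0max).
    have : i0 \in D1 c by rewrite Dc.
    rewrite inE => hd.
    rewrite (lbc' i0 (ltnSn _)) e1 (pc' _ (leqnn _)).
    apply: leq_ltn_trans fnu _; rewrite -e2; exact: hd.
- move=> c1 c2 c'; rewrite !inE => /andP[h1 /eqP D1e] /andP[h2 /eqP D2e] R1 R2.
  have lbe : forall k, k < i0.+1 -> lb1 c1 k = lb1 c2 k.
    move=> k km; have kr : k < r.+1 by lia.
    have := forallP R1 (Ordinal kr); have := forallP R2 (Ordinal kr).
    by rewrite /= km /= => /eqP <- /eqP <-.
  apply: (pt_inj (bot:=bot1) (top:=top1)).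
  elim=> [|k IH] //.
  case: (ltnP k i0.+1) => km.
    have kr : k <= r by lia.
    apply: (lab_det ax1 (maxchP h1 kr)); first by rewrite IH; apply: (maxchP h2 kr).
    by move: (lbe k km); rewrite /lb IH.
  case: (leqP k r) => kr; last first.
    have hk : r < k.+1 by lia.
    by rewrite !(ptr bot1 top1 _ hk).
  have hinc : forall c, D1 c = S -> forall t, k < t < r.+1 -> lb1 c t.-1 <= lb1 c t.
    move=> c Dc t /andP[kt tr]; apply: (noDesc ax1 Dc i0max); lia.
  rewrite (KL ax1 h1 (i:=k) (j:=r.+1) kr (leqnn _) (hinc _ D1e)).
  rewrite (KL ax1 h2 (i:=k) (j:=r.+1) kr (leqnn _) (hinc _ D2e)).
  by rewrite IH !(ptr bot1 top1 _ (ltnSn r)).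
Qed.

End Two.

Section Main.
Context {d : Order.disp_t} {L : finTBLatticeType d}.
Variables (rho : L -> nat) (r n : nat).
Hypothesis geo : geometric rho.
Hypothesis rtop : rho \top%O = r.+1.
Hypothesis hn : n_atoms (L:=L) = n.
Hypothesis r0 : 0 < r.
Hypothesis rn : r < n.

Let aL := axL geo rtop.
Let aB := axB r0 rn.

Local Notation maxchL := (@maxch _ (<=%O : rel L) rho r \bot%O \top%O).
Local Notation lbL := (@lb _ (<=%O : rel L) r \bot%O \top%O is_atom nuL).
Local Notation ptL := (@pt _ r \bot%O \top%O).
Local Notation aminL := (@amin _ (<=%O : rel L) \bot%O is_atom nuL).
Local Notation aminB := (@amin _ (@truncB_le r n) (botB r n) (@atomB r n) (@nuB r n)).
Local Notation candB := (@cand _ (@truncB_le r n) (@atomB r n)).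

Let o0 : 'I_n := Ordinal (leq_ltn_trans (leq0n r) rn).
Definition toI (k : nat) : 'I_n := insubd o0 k.

Lemma toIK k : k < n -> val (toI k) = k.
Proof. by move=> h; rewrite /toI insubdK. Qed.

Fixpoint Aset (c : r.-tuple L) (k : nat) : {set 'I_n} :=
  if k is k'.+1 then toI (lbL c k') |: Aset c k' else set0.

Lemma lbL_lt c k : maxchL c -> k <= r -> lbL c k < n.
Proof.
move=> h kr; rewrite -hn; apply: nuL_lt.
by case/and3P: (lb_cand aL h kr).
Qed.

Lemma Aset_mem c k x : x \in Aset c k -> exists2 i, i < k & x = toI (lbL c i).
Proof.
elim: k => [|k IH] /=; first by rewrite inE.
rewrite in_setU1 => /orP[/eqP ->|/IH[i ik ->]]; first by exists k.
by exists i => //; lia.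
Qed.

Lemma Aset_new c k : maxchL c -> k <= r -> toI (lbL c k) \notin Aset c k.
Proof.
move=> h kr; apply/negP => /Aset_mem[i ik e].
have := congr1 val e; rewrite !toIK ?lbL_lt //; try lia.
by move=> e'; move: (lb_neq aL h ik kr); rewrite e' eqxx.
Qed.

Lemma Aset_card c k : maxchL c -> k <= r.+1 -> #|Aset c k| = k.
Proof.
move=> h; elim: k => [|k IH] kr /=; first by rewrite cards0.
by rewrite cardsU1 Aset_new ?IH //; lia.
Qed.

Lemma single (x : 'I_n) : exists S1 : {A : {set 'I_n} | #|A| <= r},
  insub [set x] = Some S1 /\ val S1 = [set x].
Proof. by apply: insub_some; rewrite cards1. Qed.

Lemma realizeLB : forall c, maxchL c -> forall m, m <= r ->
  exists f : nat -> truncB r n, [/\ f 0 = botB r n,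
     forall k, k < m -> cov (@truncB_le r n) (@truncB_rk r n) (f k) (f k.+1),
     forall k, k < m -> lab (@truncB_le r n) (botB r n) (@atomB r n) (@nuB r n) (f k) (f k.+1) = lbL c k &
     nuB (aminB (f m) (topB r n)) <= nuL (aminL (ptL c m) \top%O)].
Proof.
move=> c h m mr.
have fS : forall k, k <= r -> exists2 Sk : {A : {set 'I_n} | #|A| <= r},
    insub (Aset c k) = Some Sk & val Sk = Aset c k.
  move=> k kr; have hk : #|Aset c k| <= r by rewrite Aset_card //; lia.
  by have [Sk [e1 e2]] := insub_some hk; exists Sk.
exists (fun k => insub (Aset c k)); split.
- have [S0 [e1 e2]] := @insub_some r n set0 (card0r r n).
  by rewrite /= e1; congr Some; apply: val_inj.
- move=> k km.
  have [Sk e1 v1] := fS k (ltnW (leq_trans km mr)).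
  have [Sk1 e2 v2] := fS k.+1 (leq_trans km mr).
  rewrite e1 e2 /cov /= v1 v2 /= subsetU1 /= cardsU1 Aset_new //=; lia.
- move=> k km.
  have [Sk e1 v1] := fS k (ltnW (leq_trans km mr)).
  have [Sk1 e2 v2] := fS k.+1 (leq_trans km mr).
  have [S1 [e3 v3]] := single (toI (lbL c k)).
  have new := Aset_new h (ltnW (leq_trans km mr)).
  rewrite e1 e2 /lab (@amin_eq _ _ _ _ _ _ _ _ _ aB _ _ (Some S1)).
  + by rewrite /nuB v3 big_set1 toIK // lbL_lt //; lia.
  + by rewrite /cand /atomB /= v3 v2 v1 cards1 eqxx /= !sub1set setU11 new.
  + move=> [B|]; rewrite /cand /atomB /= ?v1 ?v2; last by move=> /andP[/eqP]; lia.
    case/and3P=> /cards1P[y ey] yk1 yk; rewrite ey !sub1set in yk1 yk.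
    rewrite in_setU1 (negPf yk) orbF in yk1.
    by rewrite /nuB v3 ey (eqP yk1).
- have [Sm e1 v1] := fS m mr.
  have rkm : rho (ptL c m) < rho \top%O by rewrite rtop (maxch_rk aL h) //; lia.
  have [Hc _] := amin_spec \bot%O nuL (cand_ex aL (lex1 _) rkm).
  case/and3P: (Hc) => Aa _ ax'.
  set al := aminL (ptL c m) \top%O in Aa ax' *.
  have aln : nuL al < n by rewrite -hn; exact: nuL_lt.
  have [S1 [e3 v3]] := single (toI (nuL al)).
  have cb : candB (insub (Aset c m)) (topB r n) (Some S1).
    rewrite e1 /cand /atomB /= v3 v1 cards1 eqxx /= sub1set.
    apply/negP => /Aset_mem[i im ei].
    have := congr1 val ei; rewrite !toIK ?lbL_lt //; try lia.
    move=> e'.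
    have [Ai Hi1 Hi2] := and3P (lb_cand aL h (ltnW (leq_trans im mr))).
    have := @ax_nu_inj _ _ _ _ _ _ _ _ _ aL _ _ Aa Ai e'.
    move=> ea; case/negP: ax'; rewrite ea.
    exact: le_trans Hi1 (maxch_le aL h im).
  have [_ Hm] := amin_spec (botB r n) (@nuB r n) (ex_intro (fun b => candB (insub (Aset c m)) (topB r n) b) _ cb).
  apply: leq_trans (Hm _ cb) _.
  by rewrite /nuB v3 big_set1 toIK.
Qed.

End Main.

Unset Implicit Arguments.

Theorem proposition3p2 (d : Order.disp_t) (L : finTBLatticeType d)
    (rho : L -> nat) (r n : nat) :
  geometric rho ->
  rho (\top : L)%O = r.+1 ->
  @n_atoms d L = n ->
  forall S : {set 'I_r},
    (flag_h (<=%O : rel L) rho S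
       <= flag_h (@truncB_le r n) (@truncB_rk r n) S)%R.
Proof.
move=> geo rtop hn S.
case: (eqVneq S set0) => [->|S0]; first by rewrite !flag_h0.
have [j _] := set0Pn _ S0.
have r0 : 0 < r := leq_ltn_trans (leq0n _) (ltn_ord j).
have aL := axL geo rtop.
have [c0 [h0 _ _]] := EXT aL (f := fun _ => \bot%O) (m := 0) (leq0n _) erefl
  (fun k (hk : k < 0) => False_ind _ (notF hk)).
have rn : r < n by rewrite -hn; exact: (atoms_ge aL h0).
have aB := axB r0 rn.
rewrite (H aL) (H aB) lez_nat.
exact: (INJ aL aB (realizeLB geo rtop hn r0 rn) S0).
Qed.
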